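(* For every integer $d \ge 2$, there exists a monoid $H$ in $\mathcal{C}_d$ having full system of sets of lengths, i.e. $\mathcal{L}(H) = \mathbb{P}_{\mathrm{fin}}$.
   Context: Monoids are commutative, cancellative, reduced. $\mathcal{C}_d$ is the collection of all rank-$d$ submonoids of free commutative monoids of finite rank (rank = rank of the Grothendieck group). For an atomic monoid $H$ and $x\in H$, $\mathsf{L}(x)$ is the set of all $n$ such that $x$ is a sum of $n$ atoms; $\mathcal{L}(H)=\{\mathsf{L}(x)\mid x\in H\}$. $\mathbb{P}_{\mathrm{fin}} := \{\{0\},\{1\}\} \cup \{S \subset \mathbb{Z}_{\ge 2} \mid S \text{ finite}\}$. *)

(* Defs.v *)
From HB Require Import structures.
From mathcomp Require Import all_boot all_order all_algebra.
Set Implicit Arguments. Unset Strict Implicit. Unset Printing Implicit Defensive.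
Import Order.TTheory GRing.Theory Num.Theory.

(* The free commutative monoid of rank n is N^n, represented as
   {ffun 'I_n -> nat} with pointwise addition. *)
Definition vzero (n : nat) : {ffun 'I_n -> nat} := [ffun _ => 0%N].
Definition vadd (n : nat) (x y : {ffun 'I_n -> nat}) : {ffun 'I_n -> nat} :=
  [ffun i => (x i + y i)%N].
Definition vsum (n : nat) (s : seq {ffun 'I_n -> nat}) : {ffun 'I_n -> nat} :=
  foldr (@vadd n) (vzero n) s.

Definition submonoid (n : nat) (H : {ffun 'I_n -> nat} -> Prop) : Prop :=
  H (vzero n) /\ (forall x y, H x -> H y -> H (vadd x y)).

Definition toQ (n : nat) (x : {ffun 'I_n -> nat}) : 'rV[rat]_n :=
  \row_i ((x i)%:R : rat).

(* The rank of the Grothendieck group of H (the subgroup of Z^n generated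
   by H) equals d, i.e. the maximal number of Q-linearly independent
   elements of H is d. *)
Definition has_rank (n : nat) (H : {ffun 'I_n -> nat} -> Prop) (d : nat) : Prop :=
  (exists s : seq {ffun 'I_n -> nat},
      (forall x, x \in s -> H x) /\ size s = d /\ free (map (@toQ n) s)) /\
  (forall s : seq {ffun 'I_n -> nat},
      (forall x, x \in s -> H x) -> free (map (@toQ n) s) -> (size s <= d)%N).

(* Atoms of H: nonzero elements (non-units; H is reduced) that are not a
   sum of two non-units. *)
Definition atom (n : nat) (H : {ffun 'I_n -> nat} -> Prop) (a : {ffun 'I_n -> nat}) : Prop :=
  H a /\ a <> vzero n /\
  (forall b c, H b -> H c -> a = vadd b c -> b = vzero n \/ c = vzero n).

Definition lengths (n : nat) (H : {ffun 'I_n -> nat} -> Prop) (x : {ffun 'I_n -> nat})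
  (k : nat) : Prop :=
  exists s : seq {ffun 'I_n -> nat},
    size s = k /\ (forall a, a \in s -> atom H a) /\ vsum s = x.

Definition atomic (n : nat) (H : {ffun 'I_n -> nat} -> Prop) : Prop :=
  forall x, H x -> exists k, lengths H x k.

Definition Pfin (S : nat -> Prop) : Prop :=
  (forall k, S k <-> k = 0%N) \/ (forall k, S k <-> k = 1%N) \/
  ((exists k, S k) /\ (forall k, S k -> (2 <= k)%N) /\
   (exists m, forall k, S k -> (k <= m)%N)).

Definition full_system (n : nat) (H : {ffun 'I_n -> nat} -> Prop) : Prop :=
  (forall x, H x -> Pfin (lengths H x)) /\
  (forall S, Pfin S -> exists x, H x /\ (forall k, lengths H x k <-> S k)).

(* Main.v *)
Require Import Defs.
From mathcomp Require Import all_boot all_order all_algebra.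
From mathcomp Require Import zify.
From Stdlib Require Import Classical.
From mathcomp Require Import ring.
Set Implicit Arguments. Unset Strict Implicit. Unset Printing Implicit Defensive.

Section Generic.
Variable n : nat.
Implicit Types (H : {ffun 'I_n -> nat} -> Prop) (x y a : {ffun 'I_n -> nat}).

Lemma vsumE (s : seq {ffun 'I_n -> nat}) i : vsum s i = \sum_(v <- s) v i.
Proof. elim: s => [|v s IH]; first by rewrite /vsum /= big_nil ffunE.
by rewrite /vsum /= /vadd ffunE big_cons -IH. Qed.

Lemma vsum_ge (s : seq {ffun 'I_n -> nat}) a i : a \in s -> a i <= vsum s i.
Proof. rewrite vsumE; elim: s => // v s IH; rewrite inE big_cons => /orP[/eqP->|/IH].
  exact: leq_addr. by move=> h; apply: leq_trans h (leq_addl _ _). Qed.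

Lemma vec0P x : x = vzero n <-> forall i, x i = 0.
Proof. split=> [-> i|h]; first by rewrite ffunE. by apply/ffunP=> i; rewrite h ffunE. Qed.

Lemma vsum0 (s : seq {ffun 'I_n -> nat}) :
  vsum s = vzero n -> forall a, a \in s -> a = vzero n.
Proof. move=> h a ha; apply/vec0P => i; have := vsum_ge i ha.
by rewrite h ffunE leqn0 => /eqP. Qed.

Lemma vsum_cons a s : vsum (a :: s) = vadd a (vsum s). Proof. by []. Qed.

Lemma vadd0 x : vadd x (vzero n) = x.
Proof. by apply/ffunP=> i; rewrite !ffunE addn0. Qed.

Lemma vsum_in H (s : seq {ffun 'I_n -> nat}) :
  submonoid H -> (forall a, a \in s -> H a) -> H (vsum s).
Proof. case=> h0 hadd; elim: s => [|v s IH] hs //=.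
apply: hadd; first by apply: hs; rewrite inE eqxx.
by apply: IH => a ha; apply: hs; rewrite inE ha orbT. Qed.

Lemma atom_nz H a : atom H a -> a <> vzero n. Proof. by case=> _ []. Qed.

Lemma lengths0 H k : lengths H (vzero n) k <-> k = 0.
Proof. split=> [[s [<- [hs /vsum0 h0]]]|->]; last by exists [::].
case: s hs h0 => // a s hs h0; exfalso.
have ha : a \in a :: s by rewrite inE eqxx.
exact: (atom_nz (hs a ha) (h0 a ha)). Qed.

Lemma lengths_atom H x k : submonoid H -> atom H x -> (lengths H x k <-> k = 1).
Proof. move=> hH hx; split=> [[s [<- [hs hsum]]]|->]; last first.
  exists [:: x]; split=> //; split; first by move=> a; rewrite inE => /eqP->.
  by rewrite /vsum /= vadd0.
case: s hs hsum => [|a [|b s]] hs hsum //.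
  by exfalso; apply: (atom_nz hx); rewrite -hsum.
exfalso; case: hx => _ [_ hdec].
have ha : atom H a by apply: hs; rewrite inE eqxx.
have hr : H (vsum (b :: s)) by apply: vsum_in => // c hc; have /hs [] : c \in a :: b :: s by rewrite inE hc orbT.
case: (hdec a (vsum (b :: s)) (proj1 ha) hr (esym hsum)) => [/(atom_nz ha)//|h].
have hb : b \in a :: b :: s by rewrite !inE eqxx orbT.
by apply: (atom_nz (hs b hb)); apply: (vsum0 h); rewrite inE eqxx.
Qed.

Lemma size_le_total (s : seq {ffun 'I_n -> nat}) :
  (forall a, a \in s -> a <> vzero n) -> size s <= \sum_i vsum s i.
Proof.
elim: s => [|a s IH] hs //=.
have -> : \sum_i vsum (a :: s) i = \sum_i a i + \sum_i vsum s i.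
  by rewrite -big_split; apply: eq_bigr => i _; rewrite vsum_cons ffunE.
rewrite -add1n leq_add //; last by apply: IH => b hb; apply: hs; rewrite inE hb orbT.
have : a <> vzero n by apply: hs; rewrite inE eqxx.
rewrite vec0P => hnz; rewrite lt0n; apply/negP => /eqP.
move/eqP; rewrite sum_nat_eq0 => /forallP h; apply: hnz => i; exact/eqP/h.
Qed.

Lemma Pfin_part1 H x : submonoid H -> atomic H -> H x -> Pfin (lengths H x).
Proof.
move=> hH hat hx.
case: (classic (x = vzero n)) => [->|hx0]; first by left=> k; apply: lengths0.
case: (classic (atom H x)) => [ha|hna]; first by right; left=> k; apply: lengths_atom.
right; right; split; first exact: hat.
split.
  move=> k [s [<- [hs hsum]]]; case: s hs hsum => [|a [|b s]] hs hsum //.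
    by rewrite -hsum in hx0.
  exfalso; apply: hna; rewrite -hsum /vsum /= vadd0; apply: hs; exact: mem_head.
exists (\sum_i x i) => k [s [<- [hs hsum]]]; rewrite -hsum; apply: size_le_total.
by move=> a /hs /atom_nz.
Qed.

End Generic.

Lemma sum_le_size (T : eqType) (s : seq T) (P : pred T) (F : T -> nat) K :
  (forall x, x \in s -> P x -> F x <= K) -> \sum_(x <- s | P x) F x <= size s * K.
Proof.
elim: s => [|y s IH] h; first by rewrite big_nil.
rewrite big_cons /= mulSn; case: ifP => Py.
  rewrite leq_add //; first by apply: h; rewrite ?inE ?eqxx.
  by apply: IH => x hx; apply: h; rewrite inE hx orbT.
by apply: leq_trans (leq_addl K _); apply: IH => x hx; apply: h; rewrite inE hx orbT.
Qed.

Lemma size_le_sum (T : eqType) (s : seq T) (F : T -> nat) :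
  (forall x, x \in s -> 0 < F x) -> size s <= \sum_(x <- s) F x.
Proof.
elim: s => [|y s IH] h; first by rewrite big_nil.
rewrite big_cons /= -add1n leq_add //; first by apply: h; rewrite inE eqxx.
by apply: IH => x hx; apply: h; rewrite inE hx orbT.
Qed.

Lemma le_sum_mem (T : eqType) (s : seq T) (F : T -> nat) x :
  x \in s -> F x <= \sum_(y <- s) F y.
Proof.
elim: s => // y s IH; rewrite inE big_cons => /orP[/eqP->|/IH h].
  exact: leq_addr.
exact: leq_trans h (leq_addl _ _).
Qed.

Lemma le_sumn (s : seq nat) x : x \in s -> x <= sumn s.
Proof. elim: s => // y s IH; rewrite inE /= => /orP[/eqP->|/IH h].
  exact: leq_addr. exact: leq_trans h (leq_addl _ _). Qed.

Definition decode (m : nat) : seq nat :=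
  if (unpickle m : option (seq nat)) is Some l then l else [::].
Definition Lm m := [seq l <- decode m | 1 < l].
Definition Mm m := (sumn (Lm m)).+1.
Definition Dm m := (Mm m)`!.
Definition Tf m p := (p + 1) * Mm m + 1.
Definition Xf m p := ((Tf m p * Dm m + 1) + 1) * (p + 1) + 2 * Mm m.
Fixpoint Xs m := match m with 0 => Xf 0 0 | m'.+1 => Xf m'.+1 (Xs m') end.
Definition prev m := if m is m'.+1 then Xs m' else 0.
Definition Tm m := Tf m (prev m).
Definition Ym m := Tm m * Dm m + 1.
Definition aval m l := Xs m + 1 - l.
Definition bval m l := Tm m * (Dm m %/ (l - 1)).

Lemma XsE m : Xs m = (Ym m + 1) * (prev m + 1) + 2 * Mm m.
Proof. by case: m. Qed.

Lemma mem_Lm m l : l \in Lm m -> 1 < l < Mm m.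
Proof. rewrite /Lm mem_filter => /andP[h1 h]; rewrite h1 /= /Mm ltnS.
by apply: le_sumn; rewrite /Lm mem_filter h1. Qed.

Lemma Dm_dvd m l : l \in Lm m -> (l - 1) %| Dm m.
Proof. move/mem_Lm => /andP[h1 h2]; apply: dvdn_fact; apply/andP; split; lia. Qed.

Lemma Dm_div_pos m l : l \in Lm m -> 0 < Dm m %/ (l - 1).
Proof. move=> hl; have := mem_Lm hl => /andP[h1 _].
rewrite divn_gt0; last lia. apply: dvdn_leq; first exact: fact_gt0. exact: Dm_dvd. Qed.

Lemma Xs_lt m : Xs m < Xs m.+1.
Proof. rewrite [Xs m.+1]XsE /=; nia. Qed.

Lemma Xs_prev m m' : m < m' -> Xs m <= prev m'.
Proof. elim: m' => // m' IH; rewrite ltnS leq_eqVlt => /orP[/eqP->//|h].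
apply: leq_trans (IH h) _; case: m' IH h => [|m'] IH h //=; exact: ltnW (Xs_lt m'). Qed.

Lemma Xs_ge m : prev m + 2 * Mm m <= Xs m.
Proof. rewrite XsE; nia. Qed.

Lemma Ym_le m : Ym m <= Xs m.
Proof. rewrite XsE; nia. Qed.

Lemma YXlt m : Ym m * (prev m + 1) < Xs m.
Proof. rewrite XsE; have : 0 < Mm m by []. nia. Qed.

Lemma Tm_gt m : Mm m * (prev m + 1) < Tm m.
Proof. rewrite /Tm /Tf; nia. Qed.

Lemma Mm_pos m : 0 < Mm m. Proof. by []. Qed.
Lemma Dm_pos m : 0 < Dm m. Proof. exact: fact_gt0. Qed.

Lemma bval_pos m l : l \in Lm m -> 0 < bval m l.
Proof. move=> hl; rewrite /bval muln_gt0 (Dm_div_pos hl) andbT /Tm /Tf; lia. Qed.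

Lemma bval_le m l : bval m l <= Ym m.
Proof. rewrite /bval /Ym; apply: leq_trans (leq_addr _ _); apply: leq_mul => //; exact: leq_div. Qed.

Lemma bval_ge m l : l \in Lm m -> prev m < bval m l.
Proof. move=> hl; rewrite /bval; have := Dm_div_pos hl; have := Tm_gt m; have := Mm_pos m. nia. Qed.
Definition gen := (nat * nat * nat)%type.
Definition cc (g : gen) (k : nat) : nat :=
  let: (t, m, l) := g in
  if t == 0 then (if k == 0 then aval m l else if k == 1 then 1 else 0)
  else if t == 1 then (if k == 0 then 1 else if k == 1 then bval m l else 0)
  else (k == l : nat).

Section Constr.
Variable d : nat.
Hypothesis hd : 1 < d.

Definition valid (g : gen) : bool :=
  let: (t, m, l) := g in if t <= 1 then l \in Lm m else (1 < l < d).
Definition vec (g : gen) : {ffun 'I_d -> nat} := [ffun i : 'I_d => cc g i].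
Definition Hm (x : {ffun 'I_d -> nat}) : Prop :=
  exists gs, all valid gs /\ vsum (map vec gs) = x.

Lemma vsum_map gs (i : 'I_d) : vsum (map vec gs) i = \sum_(g <- gs) cc g i.
Proof. by rewrite vsumE big_map; apply: eq_bigr => g _; rewrite ffunE. Qed.

Lemma core m gs : all valid gs ->
  (forall k, 1 < k < d -> \sum_(g <- gs) cc g k = 0) ->
  \sum_(g <- gs) cc g 0 = Xs m -> \sum_(g <- gs) cc g 1 = Ym m ->
  size gs \in Lm m.
Proof.
move=> /allP hv hE h0 h1.
have nonE : forall g, g \in gs -> g.1.1 <= 1.
  move=> [[t m'] l] hg /=; rewrite leqNgt; apply/negP => ht.
  have := hv _ hg; rewrite /= leqNgt ht /= => hl.
  have := le_sum_mem (fun g => cc g l) hg; rewrite hE // /cc.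
  by move: hg ht; case: t => [|[|t]] hg //= _; rewrite eqxx.
have pos : forall g, g \in gs -> 0 < cc g 0 /\ 0 < cc g 1.
  move=> g hg; have := nonE _ hg; have := hv _ hg.
  case: g hg => [[t m'] l] hg /=; case: t hg => [|[|t]] hg //= hl _; last first.
    by rewrite bval_pos.
  by split=> //; rewrite /aval; have := mem_Lm hl; have := Xs_ge m'; lia.
have idx : forall g, g \in gs -> g.1.2 <= m.
  move=> g hg; have := nonE _ hg; have := hv _ hg.
  case: g hg => [[t m'] l] hg /= hl ht; rewrite leqNgt; apply/negP => hm.
  have hp := Xs_prev hm.
  case: t hg hl ht => [|[|t]] hg hl ht //.
    have := le_sum_mem (fun g => cc g 0) hg; rewrite h0 /= /aval.
    have := mem_Lm hl; have := Xs_ge m'; lia.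
  have := le_sum_mem (fun g => cc g 1) hg; rewrite h1 /=.
  have := bval_ge hl; have := Ym_le m; lia.
have szY : size gs <= Ym m.
  by rewrite -h1; apply: size_le_sum => g hg; case: (pos g hg).
have [g0 [g0in [g0t g0m]]] : exists g0, g0 \in gs /\ g0.1.1 = 0 /\ g0.1.2 = m.
  apply: NNPP => hno.
  have hb : \sum_(g <- gs) cc g 0 <= size gs * (prev m + 1).
    rewrite -[X in X <= _](big_filter _ xpredT) /=.
    have -> : [seq i <- gs | xpredT i] = gs by rewrite filter_predT.
    apply: sum_le_size => g hg _.
    have := hv _ hg; have := nonE _ hg; have := idx _ hg.
    case: g hg => [[t m'] l] hg /= hm ht hl.
    case: t hg hl ht => [|[|t]] hg hl ht //=; last by lia.
    have hm' : m' < m.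
      rewrite ltn_neqAle hm andbT; apply/eqP => e; apply: hno; by exists (0, m', l); split => //; split.
    have := Xs_prev hm'; rewrite /aval; lia.
  have := YXlt m; have := leq_mul szY (leqnn (prev m + 1)); lia.
case: g0 g0in g0t g0m => [[t0 m0] l0] g0in /= ht0 hm0; subst t0 m0.
have hl0 : l0 \in Lm m by have := hv _ g0in.
have hl0b := mem_Lm hl0.
have hperm := perm_to_rem g0in.
set rest := rem (0, m, l0) gs in hperm.
have sumE : forall F, \sum_(g <- gs) F g = F (0, m, l0) + \sum_(g <- rest) F g.
  by move=> F; rewrite (perm_big _ hperm) big_cons.
have szE : size gs = (size rest).+1 by rewrite (perm_size hperm).
have inrest : forall g, g \in rest -> g \in gs by move=> g; apply: mem_rem.
have r0 : \sum_(g <- rest) cc g 0 = l0 - 1.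
  move: h0; rewrite sumE /= /aval; have := Xs_ge m; lia.
have r1 : \sum_(g <- rest) cc g 1 = Tm m * Dm m.
  move: h1; rewrite sumE /= /Ym; lia.
have szr : size rest <= l0 - 1.
  by rewrite -r0; apply: size_le_sum => g /inrest hg; case: (pos g hg).
pose isB (g : gen) := (g.1.1 == 1) && (g.1.2 == m).
have split1 : \sum_(g <- rest) cc g 1 = \sum_(g <- rest | isB g) cc g 1 + \sum_(g <- rest | ~~ isB g) cc g 1.
  by rewrite (bigID isB).
have eB : \sum_(g <- rest | isB g) cc g 1 =
          Tm m * \sum_(g <- rest | isB g) (Dm m %/ (g.2 - 1)).
  rewrite big_distrr /=; apply: eq_bigr => -[[t m'] l] /andP[/eqP /= -> /eqP ->].
  by [].
have eN : \sum_(g <- rest | ~~ isB g) cc g 1 <= size rest * (prev m + 1).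
  apply: sum_le_size => g /inrest hg hnB.
  have := hv _ hg; have := nonE _ hg; have := idx _ hg.
  move: hnB; rewrite /isB.
  case: g hg => [[t m'] l] hg /= hnB hm ht hl.
  case: t hg hl ht hnB => [|[|t]] hg hl ht hnB //=; first by lia.
  have hm' : m' < m by rewrite ltn_neqAle hm andbT; move: hnB; rewrite eqxx.
  have := Xs_prev hm'; have := Ym_le m'; have := bval_le m' l; lia.
have e0 : \sum_(g <- rest | ~~ isB g) cc g 1 = 0.
  move: split1; rewrite r1 eB.
  set e := \sum_(g <- rest | ~~ isB g) cc g 1.
  set Q := \sum_(g <- rest | isB g) _.
  move=> hs.
  have he : e < Tm m.
    apply: leq_ltn_trans eN _; apply: leq_ltn_trans (Tm_gt m).
    rewrite leq_mul2r; apply/orP; right; lia.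
  have hT : 0 < Tm m by rewrite /Tm /Tf addn1.
  have hQ : Q <= Dm m by rewrite -(leq_pmul2l hT); lia.
  have : Tm m * (Dm m - Q) = e by rewrite mulnBr; lia.
  case: (Dm m - Q) => [|k]; first by rewrite muln0.
  move=> hk; move: he; rewrite -hk mulnS; lia.
have allB : forall g, g \in rest -> isB g.
  move=> g hg; apply: contraT => hn.
  move/eqP: e0; rewrite sum_nat_seq_eq0 => /allP /(_ g hg); rewrite hn /= => /eqP.
  by case: (pos g (inrest g hg)) => _ /[swap] ->.
have : \sum_(g <- rest) cc g 0 = size rest.
  rewrite -sum1_size; apply: eq_big_seq => g hg; move: (allB g hg).
  by case: g hg => [[t m'] l] hg /andP[/eqP /= -> _].
rewrite r0 szE => hsz; rewrite -hsz.
have -> : (l0 - 1).+1 = l0 by lia.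
exact: hl0.
Qed.

End Constr.

Section Constr2.
Variable d : nat.
Hypothesis hd : 1 < d.
Local Notation Hm := (@Hm d).
Local Notation vec := (vec d).
Local Notation valid := (valid d).

Definition i0 : 'I_d := Ordinal (ltnW hd).
Definition i1 : 'I_d := Ordinal hd.

Lemma pos_gen g : valid g -> g.1.1 <= 1 -> 0 < cc g 0 /\ 0 < cc g 1.
Proof.
case: g => [[t m'] l] /=; case: t => [|[|t]] //= hl _; last by rewrite bval_pos.
by split=> //; rewrite /aval; have := mem_Lm hl; have := Xs_ge m'; lia.
Qed.

Lemma gen_nz g : valid g -> vec g <> vzero d.
Proof.
move=> hv /vec0P h; case: g hv h => [[t m'] l] hv h.
case: (leqP t 1) => ht.
  have := pos_gen hv ht => -[h0 _]; move: h0.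
  have -> : cc (t, m', l) 0 = vec (t, m', l) i0 by rewrite ffunE.
  by rewrite h.
have hl : 1 < l < d by move: hv; rewrite /valid leqNgt ht.
have := h (Ordinal (proj2 (andP hl))); rewrite ffunE /= /cc.
by case: t ht {hv h} => [|[|t]] //= _; rewrite eqxx.
Qed.

Lemma E_facts g : valid g -> 1 < g.1.1 -> 1 < g.2 < d /\ forall k, cc g k = (k == g.2).
Proof.
case: g => [[t m'] l] /= hv ht; move: hv; rewrite /valid leqNgt ht /= => hl; split => // k.
by rewrite /cc; case: t ht => [|[|t]].
Qed.

Lemma Hm_gen g : valid g -> Hm (vec g).
Proof. by move=> hv; exists [:: g]; rewrite /= hv; split => //; rewrite /vsum /= vadd0. Qed.

Lemma key x : Hm x -> x <> vzero d -> (forall i : 'I_d, 1 < i -> x i = 0) ->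
  0 < x i0 /\ 0 < x i1.
Proof.
move=> [gs [/allP hv <-]] hnz hE.
case: gs hv hnz hE => [|g gs] hv hnz hE; first by [].
have hg : g \in g :: gs by rewrite inE eqxx.
case: (leqP g.1.1 1) => ht.
  have [p0 p1] := pos_gen (hv g hg) ht.
  by rewrite !vsum_map !big_cons; split; [apply: leq_trans p0 (leq_addr _ _)|apply: leq_trans p1 (leq_addr _ _)].
exfalso; have [/andP[hl1 hl2] hc] := E_facts (hv g hg) ht.
by have := hE (Ordinal hl2) hl1; rewrite vsum_map big_cons /= hc eqxx.
Qed.

Lemma nz_ex (x : {ffun 'I_d -> nat}) : x <> vzero d -> exists i, 0 < x i.
Proof. move=> h; apply: NNPP => hn; apply: h; apply/vec0P => i.
by apply/eqP; rewrite -leqn0 leqNgt; apply/negP => hi; apply: hn; exists i. Qed.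

Lemma gen_atom g : valid g -> atom Hm (vec g).
Proof.
move=> hv; split; first exact: Hm_gen.
split; first exact: gen_nz.
move=> b c hb hc e; apply: NNPP => hn.
have [bnz cnz] : b <> vzero d /\ c <> vzero d by split => h; apply: hn; [left|right].
have eI : forall i : 'I_d, cc g i = b i + c i.
  by move=> i; have := congr1 (fun f : {ffun 'I_d -> nat} => f i) e; rewrite !ffunE.
case: (leqP g.1.1 1) => ht.
  have hz : forall i : 'I_d, 1 < i -> b i = 0 /\ c i = 0.
    move=> i hi; have := eI i; case: g hv ht eI {e} => [[t m'] l] hv /= ht eI.
    by rewrite /cc; case: t ht {hv eI} => [|[|t]] //= _; rewrite !ifN; lia.
  have [b0 b1] := key hb bnz (fun i hi => proj1 (hz i hi)).
  have [c0 c1] := key hc cnz (fun i hi => proj2 (hz i hi)).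
  have := eI i0; have := eI i1; case: g hv ht eI {e} => [[t m'] l] hv /= ht eI.
  rewrite /cc; case: t ht {hv eI} => [|[|t]] //= _; lia.
have [ib hib] := nz_ex bnz; have [ic hic] := nz_ex cnz.
have ebc : forall i : 'I_d, b i + c i = (val i == g.2).
  move=> i; rewrite -eI; case: g hv ht eI {e} => [[t m'] l] hv /= ht eI.
  by rewrite /cc; case: t ht {hv eI} => [|[|t]] //= _.
have := ebc ib; have := ebc ic.
case: (eqVneq (val ib) g.2) => [eb|nb]; last by lia.
case: (eqVneq (val ic) g.2) => [ec|nc]; last by lia.
have eic : ib = ic by apply: val_inj; rewrite /= eb ec.
rewrite eic in hib; lia.
Qed.

Lemma atom_gen a : atom Hm a -> exists g, valid g /\ a = vec g.
Proof.
move=> ha; case: (ha) => [[gs [hv hs]] [hnz hdec]].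
case: gs hv hs => [|g gs] hv hs; first by rewrite -hs in hnz.
move: hv => /= /andP[hg hgs].
have hr : Hm (vsum (map vec gs)) by exists gs.
case: (hdec (vec g) _ (Hm_gen hg) hr (esym hs)) => [/(gen_nz hg)//|h0].
by exists g; split => //; rewrite -hs /= h0 vadd0.
Qed.

Lemma atoms_gens (s : seq {ffun 'I_d -> nat}) :
  (forall a, a \in s -> atom Hm a) -> exists gs, all valid gs /\ map vec gs = s.
Proof.
elim: s => [|a s IH] hs; first by exists [::].
have [g [hg ->]] := atom_gen (hs a (mem_head _ _)).
have [gs [hgs <-]] : exists gs, all valid gs /\ map vec gs = s.
  by apply: IH => b hb; apply: hs; rewrite inE hb orbT.
by exists (g :: gs); rewrite /= hg hgs.
Qed.

Lemma Hm_sub : submonoid Hm.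
Proof.
split; first by exists [::].
move=> x y [g1 [h1 <-]] [g2 [h2 <-]]; exists (g1 ++ g2); rewrite all_cat h1 h2; split => //.
by apply/ffunP => i; rewrite vsum_map ffunE !vsum_map big_cat.
Qed.

Lemma Hm_atomic : atomic Hm.
Proof.
move=> x [gs [hv <-]]; exists (size gs), (map vec gs); rewrite size_map; split => //.
split => // a /mapP [g hg ->]; apply: gen_atom; exact: (allP hv).
Qed.

Definition xm m : {ffun 'I_d -> nat} :=
  [ffun i : 'I_d => if val i == 0 then Xs m else if val i == 1 then Ym m else 0].

Lemma lengths_xm m k : lengths Hm (xm m) k <-> k \in Lm m.
Proof.
split.
  move=> [s [<- [hs hsum]]]; have [gs [hv hgs]] := atoms_gens hs.
  rewrite -hgs size_map; rewrite -hgs in hsum.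
  have hc : forall i : 'I_d, \sum_(g <- gs) cc g i = xm m i by move=> i; rewrite -vsum_map hsum.
  apply: (core hd hv).
  - move=> j /andP[hj1 hj2]; have := hc (Ordinal hj2); rewrite ffunE /=.
    by rewrite !ifN //; lia.
  - by have := hc i0; rewrite ffunE.
  - by have := hc i1; rewrite ffunE.
move=> hk; have hkb := mem_Lm hk.
exists (map vec ((0, m, k) :: nseq (k - 1) (1, m, k))); rewrite size_map /= size_nseq.
split; first lia.
split.
  move=> a; rewrite inE => /orP[/eqP->|/mapP [g hg ->]]; apply: gen_atom => //.
  by move/nseqP: hg => [-> _].
apply/ffunP => i; rewrite (vsum_map ((0, m, k) :: nseq (k - 1) (1, m, k))) big_cons big_nseq iter_addn_0 ffunE.
case: i => i hi; rewrite /cc /=; case: (eqVneq i 0) => [e|n0] /=.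
  subst i; rewrite /= /aval; have := Xs_ge m; lia.
case: (eqVneq i 1) => [e|n1] //=.
rewrite /bval -mulnA divnK; last exact: Dm_dvd.
by rewrite /Ym; lia.
Qed.

End Constr2.

Lemma decode_pickle (l : seq nat) : decode (pickle l) = l.
Proof. by rewrite /decode pickleK. Qed.

Section Rank.
Variable d : nat.
Hypothesis hd : 1 < d.
Local Open Scope ring_scope.
Import GRing.Theory Num.Theory.

Lemma rank_ub (s : seq {ffun 'I_d -> nat}) : free (map (@toQ d) s) -> (size s <= d)%N.
Proof.
move=> /eqnP h; rewrite -(size_map (@toQ d)) -h.
apply: leq_trans (dimvS (subvf _)) _.
by rewrite dimvf dim_matrix mul1r.
Qed.

Definition m1 := pickle [:: 2%N].
Lemma Lm1 : Lm m1 = [:: 2%N].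
Proof. by rewrite /Lm decode_pickle. Qed.

Definition gsR : seq gen := (0, m1, 2) :: (1, m1, 2) :: [seq (2, 0, j) | j <- iota 2 (d - 2)]%N.

Lemma toQE g (k : 'I_d) : toQ (vec d g) 0 k = (cc g k)%:R.
Proof. by rewrite /toQ !mxE ffunE. Qed.

Lemma rank_lb : free (map (@toQ d) (map (vec d) gsR)).
Proof.
set X := map _ _.
have hmem : forall g, g \in gsR -> toQ (vec d g) \in <<X>>%VS.
  by move=> g hg; apply: memv_span; apply/mapP; exists (vec d g) => //; apply/mapP; exists g.
have [a [b [ha [hb [hA hB]]]]] : exists a b, (1 < a)%N /\ (0 < b)%N /\
   (forall k, cc (0, m1, 2) k = if k == 0%N then a else if k == 1%N then 1%N else 0%N) /\
   (forall k, cc (1, m1, 2) k = if k == 0%N then 1%N else if k == 1%N then b else 0%N).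
  exists (aval m1 2), (bval m1 2); split; last by split; [apply: bval_pos; rewrite Lm1 inE|split].
  rewrite /aval; have := Xs_ge m1; have := @mem_Lm m1 2; rewrite Lm1 inE eqxx => /(_ isT).
  lia.
have hab : (a%:R : rat) * b%:R - 1 != 0.
  rewrite -natrM -(@natrB _ _ 1); last by rewrite muln_gt0; lia.
  by rewrite pnatr_eq0; lia.
have hdel : forall j : 'I_d, delta_mx 0 j \in <<X>>%VS.
  move=> j.
  case: (eqVneq (val j) 0%N) => [j0|jn0].
    have -> : delta_mx 0 j = ((a%:R * b%:R - 1)^-1 : rat) *: (b%:R *: toQ (vec d (0, m1, 2)) - toQ (vec d (1, m1, 2))).
      apply/rowP => k; rewrite !mxE !ffunE hA hB.
      case: (eqVneq (val k) 0%N) => [k0|kn0].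
        have -> : k = j by apply: val_inj; rewrite /= k0 j0.
        rewrite !eqxx /=; field; exact: hab.
      have -> : (k == j) = false by apply/negbTE; apply/eqP => e; move: kn0; by rewrite e j0.
      case: (eqVneq (val k) 1%N) => [k1|kn1] /=; rewrite ?k1 /=.
        by rewrite mulr1 subrr mulr0.
      by rewrite ?ifN ?mulr0 ?subrr // ?eqxx.
    by apply: memvZ; apply: memvB; [apply: memvZ|]; apply: hmem; rewrite !inE eqxx ?orbT.
  case: (eqVneq (val j) 1%N) => [j1|jn1].
    have -> : delta_mx 0 j = ((a%:R * b%:R - 1)^-1 : rat) *: (a%:R *: toQ (vec d (1, m1, 2)) - toQ (vec d (0, m1, 2))).
      apply/rowP => k; rewrite !mxE !ffunE hA hB.
      case: (eqVneq (val k) 1%N) => [k1|kn1].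
        have -> : k = j by apply: val_inj; rewrite /= k1 j1.
        rewrite !eqxx /= !ifN //; field; exact: hab.
      have -> : (k == j) = false by apply/negbTE; apply/eqP => e; move: kn1; by rewrite e j1.
      case: (eqVneq (val k) 0%N) => [k0|kn0] /=; rewrite ?k0 /=.
        by rewrite mulr1 subrr mulr0.
      by rewrite ?ifN ?mulr0 ?subrr // ?eqxx.
    by apply: memvZ; apply: memvB; [apply: memvZ|]; apply: hmem; rewrite !inE eqxx ?orbT.
  have -> : delta_mx 0 j = toQ (vec d (2, 0, val j)).
    apply/rowP => k; rewrite !mxE ffunE /cc /=.
    by congr (_%:R); rewrite -(inj_eq val_inj).
  apply: hmem; rewrite !inE; apply/orP; right; apply/orP; right.
  apply/mapP; exists (val j) => //; rewrite mem_iota; have hj : (\val j < d)%N := ltn_ord j; lia.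
have hfull : (fullv <= <<X>>)%VS.
  apply/subvP => v _; rewrite (row_sum_delta v); apply: memv_suml => j _.
  exact: memvZ.
have hsz : size X = d by rewrite /X !size_map /gsR /= size_map size_iota; lia.
rewrite /free hsz eqn_leq; apply/andP; split.
  by have := dim_span X; rewrite hsz.
by have := dimvS hfull; rewrite dimvf dim_matrix mul1r.
Qed.

End Rank.

Lemma fin_list (S : nat -> Prop) M : (forall k, S k -> k <= M) ->
  exists l : seq nat, forall k, S k <-> k \in l.
Proof.
move=> hM.
suff : forall N, exists l : seq nat, forall k, (k \in l) <-> (k < N /\ S k).
  case/(_ M.+1) => l hl; exists l => k; rewrite hl; split=> [h|[]//].
  by split => //; rewrite ltnS; apply: hM.
elim=> [|N [l hl]]; first by exists [::] => k; split => // -[].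
case: (classic (S N)) => hS.
  exists (N :: l) => k; split.
    rewrite inE => /orP [/eqP ->|/hl [h1 h2]]; split => //; lia.
  case=> h1 h2; rewrite inE; case: (eqVneq k N) => [->|hn] //=.
  by apply/hl; split => //; lia.
exists l => k; split; first by move/hl => [h1 h2]; split => //; lia.
case=> h1 h2; apply/hl; split => //; case: (eqVneq k N) => [e|hn]; first by subst k.
lia.
Qed.

Theorem corollary4p8 (d : nat) (hd : (2 <= d)%N) :
  exists (n : nat) (H : {ffun 'I_n -> nat} -> Prop),
    submonoid H /\ has_rank H d /\ atomic H /\ full_system H.
Proof.
exists d, (@Hm d).
have hsub : submonoid (@Hm d) by apply: Hm_sub.
have hat : atomic (@Hm d) by apply: Hm_atomic.
have hvR : all (valid d) (gsR d).
  have hv0 : valid d (0, m1, 2) by rewrite /valid Lm1 inE.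
  have hv1 : valid d (1, m1, 2) by rewrite /valid Lm1 inE.
  apply/allP => g; rewrite /gsR !inE => /orP[/eqP->//|/orP[/eqP->//|/mapP[j hj ->]]].
  by move: hj; rewrite mem_iota /valid /=; lia.
split => //; split.
  split.
    exists (map (vec d) (gsR d)); split.
      by move=> x /mapP [g hg ->]; apply: Hm_gen; exact: (allP hvR).
    split; first by rewrite size_map /gsR /= size_map size_iota; lia.
    exact: rank_lb.
  by move=> s _; apply: rank_ub.
split => //; split.
  by move=> x hx; apply: Pfin_part1.
move=> S [h0|[h1|[[k0 hk0] [h2 [M hM]]]]].
- exists (vzero d); split; first by case: hsub.
  by move=> k; rewrite h0; apply: lengths0.
- have hv : valid d (0, m1, 2) by rewrite /valid Lm1 inE.
  exists (vec d (0, m1, 2)); split; first exact: Hm_gen.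
  by move=> k; rewrite h1; apply: lengths_atom => //; apply: gen_atom.
- have [l hl] := fin_list hM.
  exists (xm d (pickle l)); split.
    have hk : k0 \in Lm (pickle l).
      by rewrite /Lm decode_pickle mem_filter (h2 _ hk0) /=; apply/hl.
    have [s [_ [hs <-]]] := proj2 (lengths_xm hd (pickle l) k0) hk.
    by apply: vsum_in => // a /hs [].
  move=> k; rewrite lengths_xm // /Lm decode_pickle mem_filter hl.
  split; first by case/andP.
  by move=> hk; rewrite hk andbT; apply: h2; apply/hl.
Qed.
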